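(* Let $k\ge4$ be even and let $G$ be a $k$-uniform hypergraph. Then the number of minimal canonical H-eigenvectors of the signless Laplacian tensor $\mathcal D+\mathcal A$ corresponding to the eigenvalue $0$, counted with $\mathbf x$ and $-\mathbf x$ identified, equals the number of odd-bipartite connected components of $G$ (counted with multiplicity as explained below).
   Context: A $k$-uniform hypergraph $G=(V,E)$ has vertex set $V=[n]$ ($n\ge k$) and nonempty edge set $E$ of $k$-element subsets; $E_i=\{e\in E:i\in e\}$, $d_i=|E_i|$. Connected components are maximal sets of vertices pairwise joined by chains of edges with consecutive edges intersecting; an isolated vertex (singleton) is also a connected component. $\mathcal A$: $a_{i_1\dots i_k}=\frac1{(k-1)!}$ if $\{i_1,\dots,i_k\}\in E$, else $0$; $\mathcal D$ diagonal with $d_{i\dots i}=d_i$; so $((\mathcal D+\mathcal A)\mathbf x^{k-1})_i=d_ix_i^{k-1}+\sum_{e\in E_i}\prod_{j\in e\setminus\{i\}}x_j$. A nonzero $\mathbf x\in\mathbb C^n$ is an eigenvector of $\mathcal T$ for eigenvalue $\lambda$ if $(\mathcal T\mathbf x^{k-1})_i=\lambda x_i^{k-1}$ for all $i$. An H-eigenvector is a real eigenvector. An eigenvector is canonical if $\max_i|x_i|=1$. An eigenvector $\mathbf x$ of eigenvalue $0$ is minimal if there is no eigenvector of eigenvalue $0$ whose support $\{i:y_i\neq0\}$ is strictly contained in that of $\mathbf x$. Counting of odd-bipartite connected components: each singleton component contributes $1$; each connected component $C$ with $|C|\ge2$ contributes the number of unordered partitions $\{S,T\}$ of $C$ with $S,T\neq\emptyset$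 such that $|e\cap S|$ is odd for every edge $e\subseteq C$ (a component with no such partition contributes $0$). The number of odd-bipartite connected components of $G$ is the sum of these contributions. *)

(* Defs.v *)
From HB Require Import structures.
From mathcomp Require Import all_boot all_order all_algebra.
Set Implicit Arguments. Unset Strict Implicit. Unset Printing Implicit Defensive.
Import Order.TTheory GRing.Theory Num.Theory.
Local Open Scope ring_scope.

Definition k_uniform (n k : nat) (E : {set {set 'I_n}}) : Prop :=
  (E != set0) /\ (forall e, e \in E -> #|e| = k).

Definition hdeg (n : nat) (E : {set {set 'I_n}}) (i : 'I_n) : nat :=
  #|[set e in E | i \in e]|.

(* ((D + A) x^{k-1})_i = d_i x_i^{k-1} + sum_{e in E_i} prod_{j in e \ i} x_j *)
Definition signless_lap_apply (C : numClosedFieldType) (n k : nat)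
    (E : {set {set 'I_n}}) (x : {ffun 'I_n -> C}) (i : 'I_n) : C :=
  (hdeg E i)%:R * x i ^+ k.-1
  + \sum_(e in E | i \in e) \prod_(j in e :\ i) x j.

Definition sl_eigenvector (C : numClosedFieldType) (n k : nat)
    (E : {set {set 'I_n}}) (lam : C) (x : {ffun 'I_n -> C}) : Prop :=
  x != 0 /\ forall i, signless_lap_apply k E x i = lam * x i ^+ k.-1.

Definition H_eigenvector (C : numClosedFieldType) (n k : nat)
    (E : {set {set 'I_n}}) (lam : C) (x : {ffun 'I_n -> C}) : Prop :=
  sl_eigenvector k E lam x /\ forall i, x i \is Num.real.

Definition canonical_vec (C : numClosedFieldType) (n : nat)
    (x : {ffun 'I_n -> C}) : Prop :=
  (forall i, `|x i| <= 1) /\ exists i, `|x i| = 1.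

Definition supp (C : numClosedFieldType) (n : nat) (x : {ffun 'I_n -> C})
  : {set 'I_n} := [set i | x i != 0].

Definition minimal_zero_eigvec (C : numClosedFieldType) (n k : nat)
    (E : {set {set 'I_n}}) (x : {ffun 'I_n -> C}) : Prop :=
  sl_eigenvector k E 0 x /\
  ~ (exists y : {ffun 'I_n -> C}, sl_eigenvector k E 0 y /\ supp y \proper supp x).

Definition min_canon_H0 (C : numClosedFieldType) (n k : nat)
    (E : {set {set 'I_n}}) (x : {ffun 'I_n -> C}) : Prop :=
  H_eigenvector k E 0 x /\ canonical_vec x /\ minimal_zero_eigvec k E x.

Definition hadj (n : nat) (E : {set {set 'I_n}}) : rel 'I_n :=
  fun i j => [exists e in E, (i \in e) && (j \in e)].

(* connected components (singletons for isolated vertices) *)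
Definition hcomponents (n : nat) (E : {set {set 'I_n}}) : {set {set 'I_n}} :=
  [set [set j | connect (hadj E) i j] | i : 'I_n].

Definition odd_bip_partitions (n : nat) (E : {set {set 'I_n}}) (Cm : {set 'I_n})
  : {set {set {set 'I_n}}} :=
  [set P : {set {set 'I_n}} | [exists S : {set 'I_n},
     [&& P == [set S; Cm :\: S], S \subset Cm, S != set0, Cm :\: S != set0 &
         [forall e in E, (e \subset Cm) ==> odd #|e :&: S|]]]].

Definition num_odd_bip_components (n : nat) (E : {set {set 'I_n}}) : nat :=
  (\sum_(Cm in hcomponents E)
     (if #|Cm| == 1%N then 1%N else #|odd_bip_partitions E Cm|))%N.

(* Main.v *)
Require Import Defs.
From HB Require Import structures.
From mathcomp Require Import all_boot all_order all_algebra.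
Import Order.TTheory GRing.Theory Num.Theory.
Local Open Scope ring_scope.
Set Implicit Arguments. Unset Strict Implicit.

Lemma sum_deg (C : numClosedFieldType) n (E : {set {set 'I_n}}) j (c : C) :
  \sum_(e in E | j \in e) c = (hdeg E j)%:R * c.
Proof.
by rewrite mulr_natl /hdeg -sumr_const; apply: eq_bigl => e; rewrite inE.
Qed.

Lemma card_minus1 {n} {e : {set 'I_n}} {j} : j \in e -> #|e :\ j| = (#|e|).-1.
Proof. by move=> je; rewrite (cardsD1 j e) je. Qed.

Lemma key_local (C : numClosedFieldType) n k (E : {set {set 'I_n}})
  (y : {ffun 'I_n -> C}) (m : C) j :
  k_uniform k E -> (forall i, signless_lap_apply k E y i = 0) ->
  `|y j| = m -> (forall e l, e \in E -> j \in e -> l \in e -> `|y l| <= m) ->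
  forall e l, e \in E -> j \in e -> l \in e -> `|y l| = m.
Proof.
move=> [_ Hk] Heq Hyj Hle.
have m0 : 0 <= m by rewrite -Hyj.
pose F e := \prod_(l in e :\ j) y l.
have HF : forall e, e \in E -> j \in e -> `|F e| <= m ^+ k.-1.
  move=> e eE je; rewrite normr_prod -(Hk e eE) -(card_minus1 je) -prodr_const.
  apply: ler_prod => l; rewrite !inE => /andP[_ le].
  by rewrite normr_ge0 /=; apply: (Hle e).
have Hj := Heq j; rewrite /signless_lap_apply in Hj.
have Hd : `|(hdeg E j)%:R * y j ^+ k.-1| = (hdeg E j)%:R * m ^+ k.-1.
  by rewrite normrM normrX Hyj normr_nat.
have Hs : \sum_(e in E | j \in e) `|F e| = \sum_(e in E | j \in e) m ^+ k.-1.
  apply/le_anti/andP; split; first by apply: ler_sum => e /andP[]; apply: HF.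
  rewrite sum_deg -Hd.
  have -> : (hdeg E j)%:R * y j ^+ k.-1 = - \sum_(e in E | j \in e) F e.
    by apply/eqP; rewrite -addr_eq0 Hj.
  by rewrite normrN ler_norm_sum.
have HFe : forall e, e \in E -> j \in e -> `|F e| = m ^+ k.-1.
  move=> e eE je.
  have := @psumr_eq0P C _ (fun e => (e \in E) && (j \in e)) (fun e => m ^+ k.-1 - `|F e|).
  move=> H; apply/eqP; rewrite eq_sym -subr_eq0; apply/eqP; apply: H.
  - by move=> e' /andP[e'E je']; rewrite subr_ge0 HF.
  - by rewrite sumrB Hs subrr.
  - by rewrite eE je.
move=> e l eE je le.
case: (eqVneq l j) => [->//|lj].
have lej : l \in e :\ j by rewrite !inE lj.
have Hl := Hle e l eE je le.
case: (eqVneq `|y l| m) => // Hne.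
have Hlt : `|y l| < m by rewrite lt_neqAle Hne Hl.
exfalso.
case: (eqVneq m 0) => [m00|mn0].
  by move: Hlt; rewrite m00 normr_lt0.
have mpos : 0 < m by rewrite lt_def mn0 m0.
have := HFe e eE je; rewrite /F normr_prod (bigD1 l) //=.
have -> : m ^+ k.-1 = m * \prod_(i in e :\ j | i != l) m.
  by rewrite -(bigD1 l (F := fun _ => m)) //= prodr_const (card_minus1 je) (Hk e eE).
move=> Habs.
have Pm : \prod_(i in e :\ j | i != l) `|y i| <= \prod_(i in e :\ j | i != l) m.
  apply: ler_prod => i /andP[]; rewrite !inE => /andP[_ ie] _.
  by rewrite normr_ge0 /=; apply: (Hle e).
have Ppos : 0 < \prod_(i in e :\ j | i != l) m by apply: prodr_gt0.
have : `|y l| * \prod_(i in e :\ j | i != l) `|y i| < m * \prod_(i in e :\ j | i != l) m.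
  apply: (le_lt_trans (y := `|y l| * \prod_(i in e :\ j | i != l) m)).
    by apply: ler_wpM2l.
  by rewrite ltr_pM2r.
by rewrite Habs ltxx.
Qed.


Lemma connect_prop (T : finType) (e : rel T) (P : pred T) :
  (forall x y, P x -> e x y -> P y) -> forall x y, connect e x y -> P x -> P y.
Proof.
move=> H x y /connectP [p pth ->]; elim: p x pth => //= a p IH x /andP[exa pth] Px.
exact: (IH a pth (H _ _ Px exa)).
Qed.

Lemma ctrans (T : finType) (e : rel T) x y z : connect e x y -> connect e y z -> connect e x z.
Proof. exact: connect_trans. Qed.

Lemma hadj_sym n (E : {set {set 'I_n}}) : symmetric (hadj E).
Proof.
move=> i j; rewrite /hadj; apply/existsP/existsP => -[e /andP[eE /andP[a b]]];
by exists e; rewrite eE a b.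
Qed.

Lemma connect_symE n (E : {set {set 'I_n}}) i j :
  connect (hadj E) i j = connect (hadj E) j i.
Proof. by apply: sym_connect_sym; apply: hadj_sym. Qed.

Lemma hadjI n (E : {set {set 'I_n}}) e i j : e \in E -> i \in e -> j \in e -> hadj E i j.
Proof. by move=> eE ie je; apply/existsP; exists e; rewrite eE ie je. Qed.

Lemma max_seq (C : numDomainType) (T : eqType) (f : T -> C) (s : seq T) a :
  (forall l, f l \is Num.real) ->
  exists2 j, j \in a :: s & forall l, l \in a :: s -> f l <= f j.
Proof.
move=> Hr; elim: s a => [|b s IH] a.
  by exists a => [|l]; rewrite ?inE // => /eqP ->.
have [j js Hj] := IH b.
case/orP: (real_leVge (Hr a) (Hr j)) => H.
  exists j; first by rewrite inE js orbT.
  by move=> l; rewrite inE => /orP[/eqP->//|]; apply: Hj.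
exists a; first by rewrite inE eqxx.
move=> l; rewrite inE => /orP[/eqP->//|ls]; exact: le_trans (Hj l ls) H.
Qed.

Lemma max_exists (C : numDomainType) (T : finType) (f : T -> C) (A : {set T}) i :
  i \in A -> (forall l, f l \is Num.real) ->
  exists2 j, j \in A & forall l, l \in A -> f l <= f j.
Proof.
move=> iA Hr.
have : i \in enum A by rewrite mem_enum.
case: (enum A) (mem_enum A) => [//|a s] Hs _.
have [j js Hj] := @max_seq C T f s a Hr.
by exists j; [rewrite -Hs | move=> l; rewrite -Hs; apply: Hj].
Qed.

Lemma comp_const (C : numClosedFieldType) n k (E : {set {set 'I_n}})
  (y : {ffun 'I_n -> C}) :
  k_uniform k E -> (forall i, signless_lap_apply k E y i = 0) ->
  forall i l, connect (hadj E) i l -> `|y l| = `|y i|.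
Proof.
move=> Hku Heq i l il.
pose K := [set l | connect (hadj E) i l].
have iK : i \in K by rewrite inE connect0.
have [j jK Hj] := @max_exists C _ (fun l => `|y l|) K i iK (fun l => normr_real _).
pose m := `|y j|.
pose P := [pred l | connect (hadj E) i l && (`|y l| == m)].
have HP : forall x z, P x -> hadj E x z -> P z.
  move=> x z /andP[ix /eqP yx] /existsP[e /andP[eE /andP[xe ze]]].
  have ixz : forall l', l' \in e -> connect (hadj E) i l'.
    by move=> l' l'e; apply: ctrans ix (connect1 (hadjI eE xe l'e)).
  apply/andP; split; first exact: ixz.
  apply/eqP; apply: (key_local Hku Heq yx) eE xe ze.
  move=> e' l' e'E xe' l'e'; apply: Hj; rewrite inE.
  exact: ctrans ix (connect1 (hadjI e'E xe' l'e')).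
have ij : connect (hadj E) i j by move: jK; rewrite inE.
have Pj : P j by rewrite /= ij eqxx.
have ji : connect (hadj E) j i by rewrite connect_symE.
have /andP[_ /eqP ->] := connect_prop HP ji Pj.
have /andP[_ /eqP ->] := connect_prop HP (ctrans ji il) Pj.
by [].
Qed.


Definition hcompo n (E : {set {set 'I_n}}) i := [set l | connect (hadj E) i l].
Definition vec (C : numClosedFieldType) n (K S : {set 'I_n}) : {ffun 'I_n -> C} :=
  [ffun l => if l \in K then (if l \in S then -1 else 1) else 0].
Definition good n (E : {set {set 'I_n}}) (K S : {set 'I_n}) :=
  [forall e in E, (e \subset K) ==> odd #|e :&: S|].

Lemma edge_in_comp n (E : {set {set 'I_n}}) i e j :
  e \in E -> j \in e -> j \in hcompo E i -> e \subset hcompo E i.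
Proof.
move=> eE je; rewrite !inE => ij; apply/subsetP => l le; rewrite inE.
exact: ctrans ij (connect1 (hadjI eE je le)).
Qed.

Lemma hcompo_same n (E : {set {set 'I_n}}) i l l' :
  l \in hcompo E i -> l' \in hcompo E i -> connect (hadj E) l l'.
Proof. rewrite !inE => il il'; by apply: ctrans il'; rewrite connect_symE. Qed.

Lemma prod_vec (C : numClosedFieldType) n (K S e : {set 'I_n}) :
  e \subset K -> \prod_(l in e) vec C K S l = (-1) ^+ #|e :&: S|.
Proof.
move=> eK; rewrite (bigID (mem S)) /=.
rewrite [X in _ * X]big1; last first.
  by move=> l /andP[le lS]; rewrite ffunE (subsetP eK l le) (negbTE lS).
rewrite mulr1 -prodr_const; apply: eq_big => l; first by rewrite inE.
by move=> /andP[le lS]; rewrite ffunE (subsetP eK l le) lS.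
Qed.

Lemma sign_eqN1 (C : numClosedFieldType) m : ((-1 : C) ^+ m == -1) = odd m.
Proof.
rewrite -signr_odd; case: (odd m) => /=; rewrite ?expr1 ?expr0 ?eqxx //.
apply/negbTE; apply/eqP => h.
have := @ltr01 C; rewrite h oppr_gt0 => H.
by have := lt_trans H (@ltr01 C); rewrite ltxx.
Qed.

Lemma vec_val (C : numClosedFieldType) n (K S : {set 'I_n}) l :
  l \in K -> vec C K S l = (-1) ^+ (l \in S).
Proof. by move=> lK; rewrite ffunE lK; case: (l \in S). Qed.

Lemma signXk (C : numClosedFieldType) (b : bool) k :
  ~~ odd k -> ((-1 : C) ^+ b) ^+ k = 1.
Proof. by move=> ek; rewrite -exprM mulnC exprM -signr_odd (negbTE ek) expr0 expr1n. Qed.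

Lemma vec_eig (C : numClosedFieldType) n k (E : {set {set 'I_n}}) i0 S :
  ~~ odd k -> (2 <= k)%N -> k_uniform k E -> good E (hcompo E i0) S ->
  forall i, signless_lap_apply k E (vec C (hcompo E i0) S) i = 0.
Proof.
move=> ek k2 [_ Hk] /forall_inP gS i.
set K := hcompo E i0; set x := vec C K S.
rewrite /signless_lap_apply.
case: (boolP (i \in K)) => iK.
  have xi : x i = (-1) ^+ (i \in S) by rewrite /x vec_val.
  have xx : x i * x i = 1 by rewrite xi -expr2 sqrr_sign.
  have xk : x i * x i ^+ k.-1 = 1 by rewrite -exprS prednK ?xi ?signXk // (leq_trans _ k2).
  set L := (X in X = 0).
  have -> : L = x i * (x i * L) by rewrite mulrA xx mul1r.
  suff -> : x i * L = 0 by rewrite mulr0.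
  rewrite /L mulrDr mulrCA xk mulr1 mulr_sumr.
  rewrite (eq_bigr (fun _ => -1)).
    by rewrite sum_deg mulrN1 subrr.
  move=> e /andP[eE ie].
  have eK : e \subset K by apply: edge_in_comp ie iK.
  rewrite -(@big_setD1 _ _ _ _ i e) //= prod_vec //.
  by apply/eqP; rewrite sign_eqN1; move/implyP: (gS e eE); apply.
have x0 : forall l, l \notin K -> x l = 0 by move=> l lK; rewrite /x ffunE (negbTE lK).
rewrite x0 // expr0n /=.
have -> : (k.-1 == 0)%N = false by case: k k2 {ek Hk} => [|[|]].
rewrite mulr0 add0r big1 // => e /andP[eE ie].
have : (0 < #|e :\ i|)%N by rewrite card_minus1 // Hk //; case: k k2 {ek Hk} => [|[|]].
case/card_gt0P => l le.
have lK : l \notin K.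
  apply/negP => lK; move: le; rewrite !inE => /andP[_ le].
  by move/negP: iK; apply; apply: (subsetP (edge_in_comp eE le lK)).
by rewrite (@big_setD1 _ _ _ _ l) //= x0 // mul0r.
Qed.

Lemma sign_neq0 (C : numClosedFieldType) (b : bool) : (-1 : C) ^+ b != 0.
Proof. by rewrite signr_eq0. Qed.

Lemma supp_vec (C : numClosedFieldType) n (K S : {set 'I_n}) : supp (vec C K S) = K.
Proof.
apply/setP => l; rewrite inE.
case: (boolP (l \in K)) => lK; first by rewrite vec_val // sign_neq0.
by rewrite ffunE (negbTE lK) eqxx.
Qed.

Lemma eig_supp_comp (C : numClosedFieldType) n k (E : {set {set 'I_n}}) (y : {ffun 'I_n -> C}) i l l' :
  k_uniform k E -> sl_eigenvector k E 0 y -> l \in hcompo E i -> l' \in hcompo E i ->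
  l \in supp y -> l' \in supp y.
Proof.
move=> Hku [_ Hy] lK l'K; rewrite !inE => yl.
have Hy0 : forall i, signless_lap_apply k E y i = 0 by move=> j; rewrite Hy mul0r.
rewrite -normr_eq0 (comp_const Hku Hy0 (hcompo_same lK l'K)) normr_eq0 //.
Qed.

Lemma vec_mincanon (C : numClosedFieldType) n k (E : {set {set 'I_n}}) i0 S :
  ~~ odd k -> (2 <= k)%N -> k_uniform k E -> good E (hcompo E i0) S ->
  min_canon_H0 k E (vec C (hcompo E i0) S).
Proof.
move=> ek k2 Hku gS.
set K := hcompo E i0.
have i0K : i0 \in K by rewrite inE connect0.
have eig : sl_eigenvector k E 0 (vec C K S).
  split; last by move=> i; rewrite mul0r; apply: vec_eig.
  apply/eqP => /ffunP /(_ i0); rewrite vec_val // ffunE; apply/eqP; exact: sign_neq0.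
split; [split => // | split].
- move=> i; rewrite ffunE; case: (i \in K); last exact: real0.
  by case: (i \in S); rewrite ?realN ?real1.
- split; last by exists i0; rewrite vec_val // normr_sign.
  move=> i; rewrite ffunE; case: (i \in K); last by rewrite normr0 ler01.
  by case: (i \in S); rewrite ?normrN normr1.
- split => // -[y [Hy]]; rewrite supp_vec => /properP [sub [l lK lny]].
  have [/eqP y0 _] := Hy.
  have [j yj] : exists j, y j != 0.
    case: (pickP (fun j => y j != 0)) => [j yj | H]; first by exists j.
    exfalso; apply: y0; apply/ffunP => j; rewrite ffunE.
    by move/negbFE: (H j) => /eqP.
  have jS : j \in supp y by rewrite inE.
  by move/negP: lny; apply; apply: (eig_supp_comp Hku Hy (subsetP sub j jS) lK jS).
Qed.


Lemma mincanon_char (C : numClosedFieldType) n k (E : {set {set 'I_n}}) (x : {ffun 'I_n -> C}) :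
  ~~ odd k -> (2 <= k)%N -> k_uniform k E -> min_canon_H0 k E x ->
  exists (i0 : 'I_n) (S : {set 'I_n}), [/\ S \subset hcompo E i0, good E (hcompo E i0) S & x = vec C (hcompo E i0) S].
Proof.
move=> ek k2 Hku [[eig real] [[can1 [i xi1]] [_ mini]]].
have Hy0 : forall j, signless_lap_apply k E x j = 0 by move=> j; rewrite eig.2 mul0r.
set K := hcompo E i.
have Hn : forall l, l \in K -> `|x l| = 1.
  by move=> l; rewrite inE => il; rewrite (comp_const Hku Hy0 il).
have pm : forall l, l \in K -> x l = (-1) ^+ (x l < 0)%R.
  by move=> l lK; rewrite {1}(realEsign (real l)) Hn // mulr1.
set S := [set l in K | x l < 0].
have xv : forall l, l \in K -> x l = vec C K S l.
  by move=> l lK; rewrite vec_val // inE lK /=; exact: pm.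
have gS : good E K S.
  apply/forall_inP => e eE; apply/implyP => eK.
  have : (0 < #|e|)%N by rewrite (Hku.2 e eE) (leq_trans _ k2).
  case/card_gt0P => j je.
  have jK : j \in K by apply: (subsetP eK).
  have Hj := Hy0 j; rewrite /signless_lap_apply in Hj.
  have xj : x j = (-1) ^+ (j \in S) by rewrite xv // vec_val.
  have xk : x j * x j ^+ k.-1 = 1 by rewrite -exprS prednK ?xj ?signXk // (leq_trans _ k2).
  have Hsum : \sum_(e' in E | j \in e') (1 + (-1) ^+ #|e' :&: S|) = 0 :> C.
    rewrite big_split /= sum_deg mulr1.
    have Hj' : x j * ((hdeg E j)%:R * x j ^+ k.-1 + \sum_(e0 in E | j \in e0) \prod_(j0 in e0 :\ j) x j0) = 0 by rewrite Hj mulr0.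
    rewrite -[RHS]Hj'.
    rewrite mulrDr mulrCA xk mulr1 mulr_sumr; congr (_ + _).
    apply: eq_bigr => e' /andP[e'E je'].
    have e'K : e' \subset K by apply: edge_in_comp je' jK.
    rewrite -(@big_setD1 _ _ _ _ j e') //= -(@prod_vec C _ K S e') //.
    by apply: eq_bigr => l le'; rewrite xv //; apply: (subsetP e'K).
  have Hnn : forall e', (e' \in E) && (j \in e') -> 0 <= 1 + (-1) ^+ #|e' :&: S| :> C.
    move=> e' _; rewrite -signr_odd; case: (odd _); rewrite ?expr1 ?subrr // expr0.
    by rewrite addr_ge0 ?ler01.
  have := @psumr_eq0P C _ (fun e' => (e' \in E) && (j \in e')) (fun e' => 1 + (-1) ^+ #|e' :&: S|) Hnn Hsum e.
  rewrite eE je => /(_ isT) /eqP; rewrite addr_eq0 eq_sym eqr_oppLR sign_eqN1; apply.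
have eigv : sl_eigenvector k E 0 (vec C K S).
  split; last by move=> l; rewrite mul0r; exact: (vec_eig C ek k2 Hku gS).
  apply/eqP => /ffunP /(_ i); rewrite vec_val ?inE ?connect0 // ffunE; apply/eqP; exact: sign_neq0.
have x0 : forall l, l \notin K -> x l = 0.
  move=> l lK; case: (eqVneq (x l) 0) => // xl; exfalso; apply: mini; exists (vec C K S); split => //.
  rewrite supp_vec; apply/properP; split.
    by apply/subsetP => l' l'K; rewrite inE -normr_eq0 Hn // oner_eq0.
  by exists l => //; rewrite inE.
exists i, S; split => //; first by apply/subsetP => l; rewrite inE => /andP[].
apply/ffunP => l; case: (boolP (l \in K)) => lK; first exact: xv.
by rewrite x0 // ffunE (negbTE lK).
Qed.


Definition repr_ok n (K S : {set 'I_n}) :=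
  if [pick l in K] is Some f then f \notin S else false.
Definition G n (E : {set {set 'I_n}}) (K : {set 'I_n}) :=
  [set S : {set 'I_n} | [&& S \subset K, good E K S & repr_ok K S]].
Definition R n (E : {set {set 'I_n}}) :=
  [set p : {set 'I_n} * {set 'I_n} | (p.1 \in hcomponents E) && (p.2 \in G E p.1)].

Lemma vec_inj (C : numClosedFieldType) n (K S K' S' : {set 'I_n}) :
  S \subset K -> S' \subset K' -> vec C K S = vec C K' S' -> K = K' /\ S = S'.
Proof.
move=> SK S'K' h.
have KK : K = K' by rewrite -(supp_vec C K S) -(supp_vec C K' S') h.
split => //; subst K'; apply/setP => l.
case: (boolP (l \in K)) => lK; last first.
  by rewrite (negbTE (contra (subsetP SK l) lK)) (negbTE (contra (subsetP S'K' l) lK)).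
have := congr1 (fun f : {ffun 'I_n -> C} => f l == -1) h; rewrite /= !vec_val // !sign_eqN1.
by rewrite !oddb.
Qed.

Lemma negvec (C : numClosedFieldType) n (K S : {set 'I_n}) :
  S \subset K -> - vec C K S = vec C K (K :\: S).
Proof.
move=> SK; apply/ffunP => l; rewrite !ffunE inE.
case: (l \in K); rewrite ?oppr0 ?andbT //.
by case: (l \in S); rewrite ?opprK.
Qed.

Lemma good_compl n k (E : {set {set 'I_n}}) (K S : {set 'I_n}) :
  ~~ odd k -> k_uniform k E -> good E K S -> good E K (K :\: S).
Proof.
move=> ek [_ Hk] /forall_inP gS; apply/forall_inP => e eE; apply/implyP => eK.
have -> : e :&: (K :\: S) = e :\: S.
  apply/setP => l; rewrite !inE; case le: (l \in e); rewrite ?andbF //.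
  by rewrite (subsetP eK l le).
rewrite cardsD oddB ?subset_leq_card ?subsetIl // (Hk e eE) (negbTE ek) /=.
by move/implyP: (gS e eE); apply.
Qed.

Lemma pick_comp n (E : {set {set 'I_n}}) i0 :
  exists2 f, [pick l in hcompo E i0] = Some f & f \in hcompo E i0.
Proof.
case: pickP => [f fK|H]; first by exists f.
by have := H i0; rewrite inE connect0.
Qed.


Lemma G_card1 n k (E : {set {set 'I_n}}) i0 :
  (2 <= k)%N -> k_uniform k E -> #|hcompo E i0| = 1%N -> #|G E (hcompo E i0)| = 1%N.
Proof.
move=> k2 [_ Hk] c1.
have [f pf fK] := pick_comp E i0.
have Kf : hcompo E i0 = [set f].
  have [x Kx] := cards1P (introT eqP c1); by move: fK; rewrite Kx inE => /eqP ->.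
suff -> : G E (hcompo E i0) = [set set0] by rewrite cards1.
apply/setP => S; rewrite !inE /repr_ok pf.
apply/idP/idP.
  case/and3P => SK _ fS; apply/eqP/setP => l; rewrite inE.
  apply/negP => lS; move: (subsetP SK l lS); rewrite Kf inE => /eqP lf.
  by move: fS; rewrite -lf lS.
move/eqP ->; rewrite sub0set inE andbT /=.
apply/forall_inP => e eE; apply/implyP => eK.
have := subset_leq_card eK; rewrite c1 (Hk e eE) => k1.
by have := leq_trans k2 k1.
Qed.

Lemma comp_edge n (E : {set {set 'I_n}}) i0 :
  #|hcompo E i0| != 1%N -> exists2 e0, e0 \in E & i0 \in e0.
Proof.
move=> c1.
have i0K : i0 \in hcompo E i0 by rewrite inE connect0.
have : (0 < #|hcompo E i0 :\ i0|)%N.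
  move: c1; rewrite (cardsD1 i0) i0K add1n; by case: #|_ :\ _|.
case/card_gt0P => l; rewrite !inE => /andP[li0 /connectP [p pth lp]].
case: p pth lp => [|a p] /=; first by move=> _ e; move: li0; rewrite e eqxx.
move=> /andP[/existsP[e /andP[eE /andP[ie _]]] _] _; by exists e.
Qed.

Lemma good_nonempty n (E : {set {set 'I_n}}) (K S e0 : {set 'I_n}) :
  e0 \in E -> e0 \subset K -> good E K S -> S != set0.
Proof.
move=> e0E e0K /forall_inP gS; apply/eqP => S0.
by move/implyP: (gS e0 e0E); rewrite e0K S0 setI0 cards0 => /(_ isT).
Qed.

Lemma G_cardn n k (E : {set {set 'I_n}}) i0 :
  ~~ odd k -> k_uniform k E -> #|hcompo E i0| != 1%N ->
  #|G E (hcompo E i0)| = #|odd_bip_partitions E (hcompo E i0)|.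
Proof.
move=> ek Hku c1.
set K := hcompo E i0.
have [e0 e0E i0e0] := comp_edge c1.
have i0K : i0 \in K by rewrite inE connect0.
have e0K : e0 \subset K by apply: edge_in_comp i0e0 i0K.
have [f pf fK] := pick_comp E i0.
have DD : forall S : {set 'I_n}, S \subset K -> K :\: (K :\: S) = S.
  by move=> S SK; rewrite setDDr setDv set0U; apply/setIidPr.
have -> : odd_bip_partitions E K = [set [set S; K :\: S] | S in G E K].
  apply/setP => P; rewrite inE; apply/existsP/imsetP.
    case=> S /and5P[/eqP -> SK _ _ gdS].
    have gS : good E K S by [].
    case rS: (repr_ok K S).
      by exists S => //; rewrite inE SK gS rS.
    exists (K :\: S).
      rewrite inE subsetDl (good_compl ek Hku gS) /= /repr_ok pf; rewrite inE negb_and negbK; apply/orP; left.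
      by move: rS; rewrite /repr_ok pf => /negbFE.
    by rewrite DD // setUC.
  case=> S; rewrite inE => /and3P[SK gS rS] ->; exists S.
  rewrite eqxx SK (good_nonempty e0E e0K gS) (good_nonempty e0E e0K (good_compl ek Hku gS)).
  exact: gS.
rewrite card_in_imset // => S S'; rewrite !inE => /and3P[SK _ rS] /and3P[S'K _ rS'] h.
have : S \in [set S'; K :\: S'] by rewrite -h !inE eqxx.
rewrite !inE => /orP[/eqP//|/eqP SD].
move: rS rS'; rewrite /repr_ok pf SD in_setD fK andbT negbK => -> //.
Qed.

Unset Implicit Arguments. Set Strict Implicit.

Theorem proposition5p1 (C : numClosedFieldType) (n k : nat)
    (E : {set {set 'I_n}}) :
  ~~ odd k -> (4 <= k)%N -> (k <= n)%N -> k_uniform k E ->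
  exists s : seq {ffun 'I_n -> C},
    [/\ uniq s,
        (forall x, x \in s -> min_canon_H0 k E x),
        (forall x, min_canon_H0 k E x -> (x \in s) (+) (- x \in s)) &
        size s = num_odd_bip_components E].
Proof.
move=> ek k4 kn Hku.
have k2 : (2 <= k)%N by apply: leq_trans k4.
have RP : forall p, p \in R E -> [/\ p.2 \subset p.1, good E p.1 p.2, repr_ok p.1 p.2 &
    exists i0, p.1 = hcompo E i0].
  move=> p; rewrite inE => /andP[/imsetP[i0 _ ->]]; rewrite inE => /and3P[SK gS rS].
  by split => //; exists i0.
have inR : forall i0 (T : {set 'I_n}), T \subset hcompo E i0 ->
    ((hcompo E i0, T) \in R E) = good E (hcompo E i0) T && repr_ok (hcompo E i0) T.
  by move=> i0 T TK; rewrite inE /= imset_f // inE TK.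
set s := map (fun p => vec C p.1 p.2) (enum (R E)).
have memv : forall i0 (T : {set 'I_n}), T \subset hcompo E i0 ->
    (vec C (hcompo E i0) T \in s) = ((hcompo E i0, T) \in R E).
  move=> i0 T TK; apply/mapP/idP => [[p] | HR]; last first.
    by exists (hcompo E i0, T); rewrite ?mem_enum.
  rewrite mem_enum => pR h; have [SK _ _ _] := RP p pR.
  have [h1 h2] := vec_inj TK SK h.
  by case: p pR {h SK} h1 h2 => a b /= pR -> ->.
exists s; split.
- rewrite map_inj_in_uniq ?enum_uniq // => p q; rewrite !mem_enum => pR qR h.
  have [pS _ _ _] := RP p pR; have [qS _ _ _] := RP q qR.
  have [h1 h2] := vec_inj pS qS h.
  by case: p q {pR qR h pS qS} h1 h2 => a b [c d] /= -> ->.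
- move=> x /mapP[p]; rewrite mem_enum => pR ->.
  have [_ gS _ [i0 Ki0]] := RP p pR.
  rewrite Ki0 in gS *; exact: vec_mincanon.
- move=> x /(mincanon_char ek k2 Hku) [i0 [S [SK gS ->]]].
  rewrite negvec // !memv ?subsetDl // !inR ?subsetDl // gS (good_compl ek Hku gS) /=.
  have [f pf fK] := pick_comp E i0.
  by rewrite /repr_ok pf in_setD fK andbT negbK; case: (f \in S).
- rewrite size_map -cardE /num_odd_bip_components.
  rewrite -sum1_card (partition_big (fun p => p.1) (mem (hcomponents E))) /=; last first.
    by move=> p /(RP p) [_ _ _ [i0 ->]]; rewrite imset_f.
  apply: eq_bigr => K /imsetP[i0 _ KE].
  have -> : K = hcompo E i0 by [].
  transitivity #|G E (hcompo E i0)|; last first.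
    case: ifP => [/eqP c1| /negbT c1]; first by rewrite (G_card1 k2 Hku c1).
    by rewrite (G_cardn ek Hku c1).
  rewrite -sum1_card (reindex_onto (fun S => (hcompo E i0, S)) (fun p => p.2)) /=.
    apply: eq_bigl => S; rewrite eqxx andbT inE /= eqxx andbT imset_f //.
  by move=> [a b] /andP[_ /eqP /= ->].
Qed.
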